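(* The covering number of the lattice of integer flows satisfies $\mathrm{Cov}(\Lambda)=\max_D q(v^D)$, where $D$ ranges over the strongly connected orientations of $G^\circ$ (the graph $G$ with its bridges deleted) and $v^D\in H$ is the unique flow satisfying $2\langle v^D,x^C\rangle=q(x^C)$ for every circuit $C\subseteq D$.
   Context: $G=(V,E)$ is a finite connected graph, possibly with parallel edges and loops; $\mathbb E$ is the set of oriented edges ($e$ and its reverse $\bar e$). Real $1$-chains $x:\mathbb E\to\mathbb R$ satisfy $x_{\bar e}=-x_e$; $\langle x,y\rangle=\sum_{e\in E}x_ey_e$, $q(x)=\langle x,x\rangle$. A flow satisfies $\sum_{e\text{ with tail }v}x_e=0$ at every vertex $v$; $H$ is the space of real flows and $\Lambda$ the lattice of integer flows. A circuit is an orientation of a cycle as a directed cycle; $x^C_e=1$ if $e\in C$, $-1$ if $\bar e\in C$, $0$ otherwise. An orientation is strongly connected if on each connected component any two vertices are joined by directed paths in both directions. For a full-rank lattice $\mathcal L$ in a real vector space with positive quadratic form $q$, the covering number $\mathrm{Cov}(\mathcal L)$ is the smallest $r$ such that for every point $x$ there is $m\in\mathcal L$ with $q(x-m)\le r$. *)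

(* Defs.v *)
From mathcomp Require Import all_boot.
From Stdlib Require Import Reals ZArith.
Set Implicit Arguments. Unset Strict Implicit. Unset Printing Implicit Defensive.

Section Graph.
(* A finite graph with parallel edges and loops: vertex set V, edge set E,
   each edge e has a reference orientation from [tl e] to [hd e]. *)
Variables (V E : finType) (tl hd : E -> V).

(* Oriented edges: (e, true) = e, (e, false) = reverse of e. *)
Definition otail (p : E * bool) : V := if p.2 then tl p.1 else hd p.1.
Definition ohead (p : E * bool) : V := if p.2 then hd p.1 else tl p.1.

Definition adj_in (keep : pred E) : rel V :=
  fun u w => [exists e, keep e &&
     (((tl e == u) && (hd e == w)) || ((tl e == w) && (hd e == u)))].

Definition connected_graph : Prop := forall u w : V, connect (adj_in predT) u w.

Definition bridge (e : E) : bool :=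
  ~~ connect (adj_in (fun e' => e' != e)) (tl e) (hd e).

(* An orientation of G° (G with bridges deleted): a choice of direction for
   each edge; [D e = true] means e keeps its reference orientation. Only the
   values on non-bridge edges matter. *)
Definition darc (D : E -> bool) : rel V :=
  fun u w => [exists e, ~~ bridge e &&
     (if D e then (tl e == u) && (hd e == w) else (hd e == u) && (tl e == w))].

Definition strongly_connected_orientation (D : E -> bool) : Prop :=
  forall u w : V, connect (adj_in (fun e => ~~ bridge e)) u w -> connect (darc D) u w.

(* Real 1-chains, represented by their values on reference orientations
   (so x_{\bar e} = - x_e). *)
Definition chain := E -> R.

Definition oval (x : chain) (p : E * bool) : R := if p.2 then x p.1 else (- x p.1)%R.

Definition inner (x y : chain) : R := \big[Rplus/0%R]_(e : E) (x e * y e)%R.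
Definition qf (x : chain) : R := inner x x.

Definition is_flow (x : chain) : Prop :=
  forall v : V, \big[Rplus/0%R]_(p : E * bool | otail p == v) oval x p = 0%R.

Definition is_int_flow (x : chain) : Prop :=
  is_flow x /\ forall e, exists z : Z, x e = IZR z.

Definition is_circuit (c : seq (E * bool)) : Prop :=
  c <> [::] /\ uniq (map fst c) /\ uniq (map otail c) /\
  cycle (fun p p' => ohead p == otail p') c.

Definition xC (c : seq (E * bool)) : chain :=
  fun e => if (e, true) \in c then 1%R else if (e, false) \in c then (-1)%R else 0%R.

Definition circuit_in (D : E -> bool) (c : seq (E * bool)) : Prop :=
  is_circuit c /\ forall p, p \in c -> ~~ bridge p.1 /\ p.2 = D p.1.

Definition vD_prop (D : E -> bool) (v : chain) : Prop :=
  forall c, circuit_in D c -> (2 * inner v (xC c))%R = qf (xC c).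

Definition covers (r : R) : Prop :=
  forall x, is_flow x -> exists m, is_int_flow m /\ (qf (fun e => x e - m e) <= r)%R.

Definition is_covering_number (r : R) : Prop :=
  covers r /\ forall r', covers r' -> (r <= r')%R.

End Graph.

Definition is_greatest (P : R -> Prop) (m : R) : Prop :=
  P m /\ forall r, P r -> (r <= m)%R.

(* Main.v *)
From Stdlib Require Import Reals ZArith Lra Lia Psatz.
From Stdlib Require Import Classical ClassicalEpsilon FunctionalExtensionality.
From HB Require Import structures.
Require Import Defs.
From mathcomp Require Import all_boot.
Delimit Scope R_scope with R.
Delimit Scope nat_scope with N.
Set Implicit Arguments. Unset Strict Implicit. Unset Printing Implicit Defensive.

Lemma Rplus_0_l' : left_id 0%R Rplus. Proof. move=> x; lra. Qed.
Lemma Rplus_assoc' : associative Rplus. Proof. move=> x y z; lra. Qed.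
Lemma Rplus_comm' : commutative Rplus. Proof. move=> x y; lra. Qed.
HB.instance Definition _ := Monoid.isComLaw.Build R 0%R Rplus Rplus_assoc' Rplus_comm' Rplus_0_l'.
Lemma Rmult_0_l' : left_zero 0%R Rmult. Proof. move=> x; ring. Qed.
Lemma Rmult_0_r' : right_zero 0%R Rmult. Proof. move=> x; ring. Qed.
Lemma Rmult_1_l' : left_id 1%R Rmult. Proof. move=> x; ring. Qed.
Lemma Rmult_assoc' : associative Rmult. Proof. move=> x y z; ring. Qed.
Lemma Rmult_comm' : commutative Rmult. Proof. move=> x y; ring. Qed.
HB.instance Definition _ := Monoid.isComLaw.Build R 1%R Rmult Rmult_assoc' Rmult_comm' Rmult_1_l'.
HB.instance Definition _ := Monoid.isMulLaw.Build R 0%R Rmult Rmult_0_l' Rmult_0_r'.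
Lemma Rmult_Dl : left_distributive Rmult Rplus. Proof. move=> x y z; ring. Qed.
Lemma Rmult_Dr : right_distributive Rmult Rplus. Proof. move=> x y z; ring. Qed.
HB.instance Definition _ := Monoid.isAddLaw.Build R Rmult Rplus Rmult_Dl Rmult_Dr.

Lemma sumRD (I : Type) (r : seq I) (P : pred I) (F G : I -> R) : \big[Rplus/0%R]_(i <- r | P i) (F i + G i)%R = (\big[Rplus/0%R]_(i <- r | P i) F i + \big[Rplus/0%R]_(i <- r | P i) G i)%R.
Proof. by rewrite big_split. Qed.
Lemma sumRM (I : Type) (r : seq I) (P : pred I) (t : R) (F : I -> R) : \big[Rplus/0%R]_(i <- r | P i) (t * F i)%R = (t * \big[Rplus/0%R]_(i <- r | P i) F i)%R.
Proof. by rewrite big_distrr. Qed.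
Open Scope R_scope.

Fixpoint allseqs (T : finType) (n : nat) : seq (seq T) :=
  if n is n'.+1 then [::] :: [seq x :: s | x <- enum T, s <- allseqs T n'] else [:: [::]].

Lemma in_allseqs (T : finType) n (s : seq T) : (size s <= n)%N -> s \in allseqs T n.
Proof.
elim: n s => [|n IH] [|x s] //= Hs.
rewrite in_cons /=; apply: allpairs_f; [exact: mem_enum | exact: IH].
Qed.

Lemma list_min (X : Type) (l : seq X) (P : X -> Prop) (f : X -> R) :
  (exists x, List.In x l /\ P x) -> exists x, List.In x l /\ P x /\ forall y, List.In y l -> P y -> f x <= f y.
Proof.
elim: l => [|a l IH] [x [Hx Px]] //.
case: (classic (exists y, List.In y l /\ P y)) => [Hex|Hno].
  have [m [Hm [Pm Hmin]]] := IH Hex.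
  case: (classic (P a /\ f a <= f m)) => [[Pa Ham]|Hn].
    exists a; split; first by left.
    split => // y [<-|Hy] Py; [lra | have := Hmin y Hy Py; lra].
  exists m; split; first by right.
  split => // y [<-|Hy] Py; last exact: Hmin.
  apply: Rnot_lt_le => Hlt; apply: Hn; split => //; lra.
have Pa : P a.
  case: Hx => [Eax|Hx]; first by rewrite Eax.
  by case: Hno; exists x.
exists a; split; first by left.
split => // y [<-|Hy] Py; first lra.
case: Hno; by exists y.
Qed.

Section G.
Variables (V E : finType) (tl hd : E -> V).
Local Notation otl := (Defs.otail tl hd).
Local Notation ohd := (Defs.ohead tl hd).
Local Notation flow := (is_flow tl hd).
Local Notation chain := (chain E).
Implicit Types (x y z : chain).

Definition grad (v : V) : chain := fun e => ((if tl e == v then 1 else 0) - (if hd e == v then 1 else 0)).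

Lemma flow_sum x v : \big[Rplus/0]_(p : E * bool | otl p == v) oval x p = inner x (grad v).
Proof.
rewrite big_mkcond -(pair_bigA _ (fun e b => if otl (e, b) == v then oval x (e, b) else 0)) /=.
rewrite /inner; apply: eq_bigr => e _; rewrite big_bool /= /oval /grad /=.
by case: (tl e == v); case: (hd e == v); ring.
Qed.

Lemma flow_iff x : flow x <-> forall v, inner x (grad v) = 0.
Proof. split=> H v; first by rewrite -flow_sum; apply: H.
by rewrite flow_sum. Qed.

Lemma inner_sym x y : inner x y = inner y x.
Proof. apply: eq_bigr => e _; ring. Qed.

Lemma inner_ext x x' y y' : (forall e, x e = x' e) -> (forall e, y e = y' e) -> inner x y = inner x' y'.
Proof. by move=> H1 H2; apply: eq_bigr => e _; rewrite H1 H2. Qed.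

Lemma inner_lin a b x y z : inner (fun e => a * x e + b * y e) z = a * inner x z + b * inner y z.
Proof. rewrite /inner -!sumRM -sumRD; apply: eq_bigr => e _ /=; ring. Qed.

Lemma inner_add x y z : inner (fun e => x e + y e) z = inner x z + inner y z.
Proof. rewrite (inner_ext (x' := fun e => 1 * x e + 1 * y e) (y' := z)) ?inner_lin; [ring|move=>e; ring|by []]. Qed.

Lemma inner_sub x y z : inner (fun e => x e - y e) z = inner x z - inner y z.
Proof. rewrite (inner_ext (x' := fun e => 1 * x e + (-1) * y e) (y' := z)) ?inner_lin; [ring|move=>e; ring|by []]. Qed.

Lemma inner_scale a x z : inner (fun e => a * x e) z = a * inner x z.
Proof. by rewrite /inner -sumRM; apply: eq_bigr => e _ /=; ring. Qed.

Lemma inner0 z : inner (fun _ => 0) z = 0.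
Proof. rewrite /inner big1 // => e _; ring. Qed.

Lemma sumR_ge0 (I : finType) (F : I -> R) : (forall i, 0 <= F i) -> 0 <= \big[Rplus/0]_i F i.
Proof. move=> H; elim/big_ind: _ => //; [lra| move=> a b; lra]. Qed.

Lemma qf_ge0 x : 0 <= qf x.
Proof. apply: sumR_ge0 => e; nra. Qed.

Lemma sumR_ge_term (I : finType) (F : I -> R) i : (forall i, 0 <= F i) -> F i <= \big[Rplus/0]_i F i.
Proof. move=> H; rewrite (bigD1 i) //=; have := sumR_ge0 (I:=I) (F := fun j => if j != i then F j else 0).
rewrite -big_mkcond /=. move=> H2; have := H2 (fun j => ltac:(case: (j != i); [apply: H| lra])); lra. Qed.

Lemma qf_term x e : x e * x e <= qf x.
Proof. apply: (sumR_ge_term (F := fun e => x e * x e)) => i; nra. Qed.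

Lemma qf_eq0 x : qf x = 0 -> forall e, x e = 0.
Proof. move=> H e; have := qf_term x e; rewrite H => H1; nra. Qed.


Fixpoint in_span (s : seq chain) (p : chain) : Prop :=
  match s with [::] => forall e, p e = 0 | a :: s' => exists t, in_span s' (fun e => p e - t * a e) end.

Lemma span_ext s p p' : (forall e, p e = p' e) -> in_span s p -> in_span s p'.
Proof.
elim: s p p' => [|a s IH] p p' H /=; first by move=> H0 e; rewrite -H.
by case=> t Ht; exists t; apply: IH Ht => e; rewrite H.
Qed.

Lemma span_orth s w p : (forall a, List.In a s -> inner w a = 0) -> in_span s p -> inner w p = 0.
Proof.
elim: s p => [|a s IH] p /= Hw.
  move=> H0; rewrite (inner_ext (x' := w) (y' := fun _ => 0)) // inner_sym; exact: inner0.
case=> t Ht; have := IH _ (fun b Hb => Hw b (or_intror Hb)) Ht.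
rewrite inner_sym inner_sub inner_scale inner_sym (inner_sym a w) (Hw a (or_introl erefl)); lra.
Qed.

Lemma span_lin s p1 p2 c1 c2 : in_span s p1 -> in_span s p2 -> in_span s (fun e => c1 * p1 e + c2 * p2 e).
Proof.
elim: s p1 p2 => [|a s IH] p1 p2 /=; first by move=> H1 H2 e; rewrite H1 H2; ring.
case=> t1 H1 [t2 H2]; exists (c1 * t1 + c2 * t2).
by apply: span_ext (IH _ _ H1 H2) => e; ring.
Qed.

Lemma span_cons a s p : in_span s p -> in_span (a :: s) p.
Proof. by move=> H; exists 0; apply: span_ext H => e; ring. Qed.

Lemma proj_list s z : exists p, in_span s p /\ forall a, List.In a s -> inner (fun e => z e - p e) a = 0.
Proof.
elim: s z => [|a s IH] z.
  by exists (fun _ => 0) => /=; split.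
have [p' [Hp' Op']] := IH z; have [pa [Hpa Opa]] := IH a.
pose a' := fun e => a e - pa e.
have Oa's : forall b, List.In b s -> inner a' b = 0 by [].
have Ozp_pa : inner (fun e => z e - p' e) pa = 0 by apply: span_orth Hpa.
case: (Req_dec (qf a') 0) => Hq.
  exists p'; split; first exact: span_cons.
  move=> b [<-|Hb]; last exact: Op'.
  have Ha0 := qf_eq0 Hq.
  rewrite (inner_ext (x' := fun e => z e - p' e) (y' := pa)) // => e.
  by have := Ha0 e; rewrite /a'; lra.
pose t := inner (fun e => z e - p' e) a' / qf a'.
exists (fun e => p' e + t * a' e); split.
  exists t; apply: span_ext (span_lin 1 (- t) Hp' Hpa) => e; rewrite /a'; ring.
have Hzs : forall b, List.In b s -> inner (fun e => z e - (p' e + t * a' e)) b = 0.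
  move=> b Hb; rewrite (inner_ext (x' := fun e => 1 * (z e - p' e) + (- t) * a' e) (y' := b)); last by [].
    by rewrite inner_lin Op' // Oa's //; ring.
  by move=> e; ring.
move=> b [<-|Hb]; last exact: Hzs.
rewrite (inner_ext (x' := fun e => z e - (p' e + t * a' e)) (y' := fun e => 1 * a' e + 1 * pa e)) //; last first.
  by move=> e; rewrite /a'; ring.
rewrite inner_sym inner_lin !(inner_sym _ (fun e => z e - _)).
rewrite (span_orth Hzs Hpa).
rewrite (inner_ext (x' := fun e => 1 * (z e - p' e) + (- t) * a' e) (y' := a')); last by []; last by move=> e; ring.
rewrite inner_lin /t /qf; field_simplify; first by ring.
exact: Hq.
Qed.

Lemma In_mem (T : eqType) (s : seq T) (u : T) : u \in s -> List.In u s.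
Proof. elim: s => [|w s IH] //=; rewrite in_cons => /orP [/eqP ->|H]; [by left | by right; apply: IH]. Qed.

Lemma proj_ex z : exists y, flow y /\ forall h, flow h -> inner (fun e => z e - y e) h = 0.
Proof.
have [p [Hp Op]] := proj_list (map grad (enum V)) z.
exists (fun e => z e - p e); split.
  apply/flow_iff => v; apply: Op; apply: List.in_map; apply: In_mem; exact: mem_enum.
move=> h /flow_iff Hh.
rewrite (inner_ext (x' := p) (y' := h)); last by []; last by move=> e; ring.
rewrite inner_sym; apply: span_orth Hp => a /List.in_map_iff [v [<- _]]; exact: Hh.
Qed.


Lemma flow_lin a b x y : flow x -> flow y -> flow (fun e => a * x e + b * y e).
Proof. move=> /flow_iff Hx /flow_iff Hy; apply/flow_iff => v; rewrite inner_lin Hx Hy; ring. Qed.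

Definition Pr (z : chain) : chain := proj1_sig (constructive_indefinite_description _ (proj_ex z)).

Lemma Pr_spec z : flow (Pr z) /\ forall h, flow h -> inner (fun e => z e - Pr z e) h = 0.
Proof. rewrite /Pr; case: constructive_indefinite_description => y Hy //. Qed.

Lemma Pr_flow z : flow (Pr z). Proof. by case: (Pr_spec z). Qed.

Lemma Pr_char z y : flow y -> (forall h, flow h -> inner (fun e => z e - y e) h = 0) -> forall e, Pr z e = y e.
Proof.
move=> Fy Oy.
have [FP OP] := Pr_spec z.
have Fd : flow (fun e => 1 * Pr z e + (-1) * y e) by apply: flow_lin.
have : qf (fun e => 1 * Pr z e + (-1) * y e) = 0.
  rewrite /qf (inner_ext (x' := fun e => 1 * (z e - y e) + (-1) * (z e - Pr z e)) (y' := fun e => 1 * Pr z e + (-1) * y e)) //; last by move=> e; ring.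
  by rewrite inner_lin OP // Oy //; ring.
move=> /qf_eq0 H e; have := H e; lra.
Qed.

Lemma inner_Pr z h : flow h -> inner z h = inner (Pr z) h.
Proof. move=> Fh; have [_ OP] := Pr_spec z; have := OP h Fh; rewrite inner_sub; lra. Qed.

Lemma Pr_lin a b z1 z2 e : Pr (fun e => a * z1 e + b * z2 e) e = a * Pr z1 e + b * Pr z2 e.
Proof.
apply: (Pr_char (y := fun e => a * Pr z1 e + b * Pr z2 e)); first by apply: flow_lin; apply: Pr_flow.
move=> h Fh; rewrite (inner_ext (x' := fun e => a * (z1 e - Pr z1 e) + b * (z2 e - Pr z2 e)) (y' := h)) //; last by move=> e'; ring.
by rewrite inner_lin; have [_ O1] := Pr_spec z1; have [_ O2] := Pr_spec z2; rewrite O1 // O2 //; ring.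
Qed.

Lemma Pr_orth0 z : (forall h, flow h -> inner z h = 0) -> forall e, Pr z e = 0.
Proof.
move=> H; apply: (Pr_char (y := fun _ => 0)); first by apply/flow_iff => v; exact: inner0.
by move=> h Fh; rewrite (inner_ext (x' := z) (y' := h)) ?H // => e; ring.
Qed.

Lemma Pr_id z : flow z -> forall e, Pr z e = z e.
Proof. move=> Fz; apply: (Pr_char (y := z)) => // h _; rewrite (inner_ext (x' := fun _ => 0) (y' := h)) ?inner0 // => e; ring. Qed.

Definition orel (p p' : E * bool) : bool := ohd p == otl p'.

Definition wch (c : seq (E * bool)) : chain :=
  fun e => \big[Rplus/0]_(p <- c) (if p.1 == e then (if p.2 then 1 else -1) else 0).

Lemma inner_wch y c : inner y (wch c) = \big[Rplus/0]_(p <- c) oval y p.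
Proof.
rewrite /inner /wch.
under eq_bigr => e _ do rewrite -sumRM.
rewrite exchange_big /=; apply: eq_bigr => p _.
rewrite (eq_bigr (fun e => if e == p.1 then y e * (if p.2 then 1 else -1) else 0)); last first.
  by move=> e _; rewrite eq_sym; case: (e == p.1) => //; ring.
rewrite -big_mkcond big_pred1_eq /oval; case: p.2 => /=; ring.
Qed.

Lemma heads_tails_aux (s : seq (E * bool)) p q : path orel p (rcons s q) -> map ohd (p :: s) = map otl (rcons s q).
Proof.
elim: s p => [|r s IH] p /=; first by rewrite andbT => /eqP ->.
by move=> /andP [/eqP -> H]; have := IH r H => /= ->.
Qed.

Lemma heads_tails c : cycle orel c -> map ohd c = map otl (rot 1 c).
Proof. case: c => [|p s] //=; rewrite rot1_cons; exact: heads_tails_aux. Qed.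

Lemma sum_heads_tails (F : V -> R) c : cycle orel c ->
  \big[Rplus/0]_(p <- c) F (ohd p) = \big[Rplus/0]_(p <- c) F (otl p).
Proof.
move=> Hc; rewrite -(big_map ohd xpredT F) heads_tails // big_map.
by apply: perm_big; rewrite perm_rot.
Qed.

Lemma wch_flow c : cycle orel c -> flow (wch c).
Proof.
move=> Hc; apply/flow_iff => v; rewrite inner_sym inner_wch.
rewrite (eq_bigr (fun p => (if otl p == v then 1 else 0) + (-1) * (if ohd p == v then 1 else 0))); last first.
  by case=> e [] _; rewrite /oval /grad /Defs.otail /Defs.ohead /=; ring.
rewrite sumRD sumRM (sum_heads_tails (fun w => if w == v then 1 else 0)) //; ring.
Qed.


Lemma sum_le_seq (T : Type) (c : seq T) (F G : T -> R) : (forall p, F p <= G p) ->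
  \big[Rplus/0]_(p <- c) F p <= \big[Rplus/0]_(p <- c) G p.
Proof. move=> H; elim: c => [|p c IH]; rewrite ?big_nil ?big_cons; [lra | have := H p; lra]. Qed.

Lemma sum_pred1_uniq (c : seq (E * bool)) q : uniq c ->
  \big[Rplus/0]_(p <- c) (if p == q then 1 else 0) = if q \in c then 1 else 0.
Proof.
elim: c => [|p c IH] /=; first by rewrite big_nil.
move=> /andP [Hp Hu]; rewrite big_cons IH // in_cons.
have [Epq|Hne] := eqVneq p q.
  by subst q; move: Hp; case: (p \in c) => //= _; lra.
by rewrite /=; lra.
Qed.

Lemma wch_split c e : wch c e =
  \big[Rplus/0]_(p <- c) (if p == (e, true) then 1 else 0) - \big[Rplus/0]_(p <- c) (if p == (e, false) then 1 else 0).
Proof.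
rewrite /wch; elim: c => [|[f b] c IH]; rewrite ?big_nil ?big_cons; first lra.
rewrite IH /=; rewrite !xpair_eqE; case: (f == e); case: b => /=; lra.
Qed.

Lemma wch_uniq c e : uniq c -> wch c e = (if (e, true) \in c then 1 else 0) - (if (e, false) \in c then 1 else 0).
Proof. by move=> Hu; rewrite wch_split !sum_pred1_uniq. Qed.

Lemma qf_wch_le c : uniq c -> qf (wch c) <= \big[Rplus/0]_(p <- c) 1.
Proof.
move=> Hu; rewrite /qf inner_wch; apply: sum_le_seq => [[e b]].
rewrite /oval /= wch_uniq //; case: ((e, true) \in c); case: ((e, false) \in c); case: b => /=; lra.
Qed.

Lemma uniq_fst_both (c : seq (E * bool)) e b1 b2 : uniq (map fst c) -> (e, b1) \in c -> (e, b2) \in c -> b1 = b2.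
Proof.
elim: c => [|[f b] c IH] //= /andP [Hf Hu]; rewrite !in_cons !xpair_eqE.
case/orP=> [/andP [/eqP E1 /eqP B1]|H1]; case/orP=> [/andP [/eqP E2 /eqP B2]|H2].
- by rewrite B1 B2.
- by move: Hf; rewrite -E1 (map_f fst H2).
- by move: Hf; rewrite -E2 (map_f fst H1).
- exact: IH.
Qed.

Lemma xC_wch c : uniq (map fst c) -> forall e, xC c e = wch c e.
Proof.
move=> Hu e; rewrite wch_uniq ?(map_uniq Hu) // /xC.
case H1: ((e, true) \in c); case H2: ((e, false) \in c) => //; try lra.
by have := uniq_fst_both Hu H1 H2.
Qed.

Lemma oval_wch_circ c p : uniq (map fst c) -> p \in c -> oval (wch c) p = 1.
Proof.
move=> Hu; case: p => e b Hp; rewrite /oval /= wch_uniq ?(map_uniq Hu) //.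
case: b Hp => Hp /=.
  case H2: ((e, false) \in c); first by have := uniq_fst_both Hu Hp H2.
  by rewrite Hp; lra.
case H2: ((e, true) \in c); first by have := uniq_fst_both Hu Hp H2.
by rewrite Hp; lra.
Qed.

Lemma qf_wch_circ c : uniq (map fst c) -> qf (wch c) = \big[Rplus/0]_(p <- c) 1.
Proof. move=> Hu; rewrite /qf inner_wch big_seq_cond [RHS]big_seq_cond; apply: eq_bigr => p /andP [Hp _]; exact: oval_wch_circ. Qed.


Definition wp (c : seq (E * bool)) (v : V) : bool :=
  if c is p :: s then path orel p s && (ohd (last p s) == v) else true.

Definition swalk (A : pred (E * bool)) (c : seq (E * bool)) (v : V) : bool :=
  [&& all A c, wp c v & uniq (rcons (map otl c) v)].

Lemma wp_cat c1 q2 s2 a : wp (c1 ++ q2 :: s2) a = wp c1 (otl q2) && wp (q2 :: s2) a.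
Proof.
case: c1 => [|y t] //=.
rewrite cat_path last_cat /= /orel; case: (path orel y t) => //=.
by rewrite andbA.
Qed.

Lemma wp_rcons c p : wp c (otl p) -> wp (rcons c p) (ohd p).
Proof.
case: c => [|x s] /=; first by rewrite eqxx.
by rewrite rcons_path last_rcons eqxx andbT /orel => ->.
Qed.

Lemma swalk_snoc A c p : swalk A c (otl p) -> A p -> ohd p \notin rcons (map otl c) (otl p) ->
  swalk A (rcons c p) (ohd p).
Proof.
case/and3P=> HA Hw Hu Ap Hn; apply/and3P; split.
- by rewrite all_rcons Ap HA.
- exact: wp_rcons.
- by rewrite map_rcons rcons_uniq Hn Hu.
Qed.

Lemma swalk_split A c1 q2 s2 p : swalk A (c1 ++ q2 :: s2) (otl p) -> A p -> ohd p = otl q2 ->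
  [/\ swalk A c1 (otl q2), cycle orel (q2 :: rcons s2 p), uniq (map otl (q2 :: rcons s2 p))
    & all A (q2 :: rcons s2 p)].
Proof.
case/and3P=> HA Hw Hu Ap Hb.
rewrite wp_cat in Hw; case/andP: Hw => Hw1 Hw2.
rewrite all_cat in HA; case/andP: HA => HA1 HA2.
rewrite map_cat /= rcons_cat cat_uniq in Hu; case/and3P: Hu => Hu1 Hh Hu2.
split.
- apply/and3P; split => //; rewrite rcons_uniq Hu1 andbT.
  by apply: contra Hh => H; apply/hasP; exists (otl q2) => //; rewrite in_cons eqxx.
- rewrite /cycle rcons_path rcons_path last_rcons.
  move: Hw2 => /= /andP [-> /eqP Hl] /=; rewrite /orel Hl eqxx Hb eqxx //.
- by rewrite /= map_rcons.
- by rewrite /= all_rcons Ap /=; move: HA2 => /= /andP [-> ->].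
Qed.

Definition slen (l : E * bool -> R) (c : seq (E * bool)) := \big[Rplus/0]_(p <- c) l p.

Lemma slen_cat l c1 c2 : slen l (c1 ++ c2) = slen l c1 + slen l c2.
Proof. by rewrite /slen big_cat. Qed.

Lemma slen_rcons l c p : slen l (rcons c p) = slen l c + l p.
Proof. by rewrite -cats1 slen_cat /slen big_seq1. Qed.


Lemma swalk_size A c v : swalk A c v -> (size c <= #|V|)%N.
Proof.
case/and3P=> _ _ /card_uniqP Hu.
have := max_card (mem (rcons (map otl c) v)); rewrite Hu size_rcons size_map => H.
exact: ltnW.
Qed.

Lemma swalk_nil A v : swalk A [::] v.
Proof. by []. Qed.

Lemma potential (A : pred (E * bool)) (l : E * bool -> R) :
  (forall c, c != [::] -> all A c -> cycle orel c -> uniq (map otl c) -> 0 <= slen l c) ->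
  exists phi : V -> R, forall p, A p -> phi (ohd p) <= phi (otl p) + l p.
Proof.
move=> Hcyc.
have Hmin : forall v, exists r, (exists c, swalk A c v /\ slen l c = r) /\
    (forall c', swalk A c' v -> r <= slen l c').
  move=> v.
  have [|c [_ [Hc Hm]]] := @list_min _ (@allseqs (E * bool)%type #|V|) (fun c => swalk A c v) (slen l).
    by exists [::]; split; [apply: In_mem; apply: in_allseqs | exact: swalk_nil].
  exists (slen l c); split; first by exists c.
  move=> c' Hc'; apply: Hm => //; apply: In_mem; apply: in_allseqs; exact: swalk_size Hc'.
pose phi v := proj1_sig (constructive_indefinite_description _ (Hmin v)).
have Hphi : forall v, (exists c, swalk A c v /\ slen l c = phi v) /\
    (forall c', swalk A c' v -> phi v <= slen l c').
  by move=> v; rewrite /phi; case: constructive_indefinite_description.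
exists phi => p Ap.
have [[c [Hc Hcl]] _] := Hphi (otl p).
have [_ Hb] := Hphi (ohd p).
case Hmem: (ohd p \in rcons (map otl c) (otl p)); last first.
  have := Hb _ (swalk_snoc Hc Ap (negbT Hmem)); rewrite slen_rcons Hcl; lra.
move: Hmem; rewrite mem_rcons in_cons => /orP [/eqP Hba|Hin].
  have H1 : 0 <= slen l [:: p].
    by apply: Hcyc => //=; rewrite ?Ap // /orel Hba eqxx.
  by move: H1; rewrite /slen big_seq1 Hba; lra.
case/mapP: Hin => q2 Hq2 Hbq.
move: Hc Hcl; case/splitPr: Hq2 => c1 s2 Hc Hcl.
have [Hc1 Hcy Hun HA] := swalk_split Hc Ap Hbq.
have := Hcyc (q2 :: rcons s2 p) isT HA Hcy Hun.
have := Hb c1; rewrite Hbq => H2; have := H2 Hc1.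
move: Hcl; rewrite slen_cat -[q2 :: rcons s2 p]/(rcons (q2 :: s2) p) slen_rcons.
lra.
Qed.


Lemma path_walk (r : rel V) (A : pred (E * bool)) :
  (forall u w, r u w -> exists p, A p /\ otl p = u /\ ohd p = w) ->
  forall a s, path r a s -> exists c, [/\ all A c, wp c (last a s) & rcons (map otl c) (last a s) = a :: s].
Proof.
move=> Hr a s; elim: s a => [|w s IH] a /=.
  by move=> _; exists [::].
case/andP=> raw Hp; have [c [HA Hw Hv]] := IH w Hp.
have [p [Ap [Hpa Hpw]]] := Hr _ _ raw.
exists (p :: c); split; first by rewrite /= Ap HA.
  case: c HA Hw Hv => [|q c] HA Hw Hv /=.
    by move: Hv => /= [->]; rewrite Hpw eqxx.
  move: Hv => /= [Hqw _]; move: Hw => /= /andP [-> ->]; by rewrite /orel Hpw Hqw eqxx.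
by rewrite /= Hv Hpa.
Qed.

Lemma connect_swalk (r : rel V) (A : pred (E * bool)) :
  (forall u w, r u w -> exists p, A p /\ otl p = u /\ ohd p = w) ->
  forall a b, connect r a b -> exists c s, swalk A c b /\ rcons (map otl c) b = a :: s.
Proof.
move=> Hr a b /connectP [s Hp ->].
case: (shortenP Hp) => s' Hp' Hu _.
have [c [HA Hw Hv]] := path_walk Hr Hp'.
exists c, s'; split => //; apply/and3P; split => //; by rewrite Hv.
Qed.

Lemma swalk_close A c s a b p : swalk A c b -> rcons (map otl c) b = a :: s -> A p -> otl p = b -> ohd p = a ->
  [/\ cycle orel (rcons c p), uniq (map otl (rcons c p)) & all A (rcons c p)].
Proof.
case/and3P=> HA Hw Hu Hv Ap Hpb Hpa; split.
- case: c HA Hw Hu Hv => [|q c] HA Hw Hu /= Hv.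
    by move: Hv => [Hab _]; rewrite /orel Hpa Hpb Hab eqxx.
  move: Hv => [Hqa _]; rewrite rcons_path rcons_path last_rcons; move: Hw => /andP [-> /eqP Hl].
  by rewrite /orel Hl Hpb Hpa Hqa !eqxx.
- by rewrite map_rcons Hpb.
- by rewrite all_rcons Ap HA.
Qed.

Lemma sum_delta (F : V -> R) w : \big[Rplus/0]_(v : V) (F v * (if w == v then 1 else 0)) = F w.
Proof.
rewrite (eq_bigr (fun v => if v == w then F v else 0)); last by move=> v _; rewrite eq_sym; case: (v == w); ring.
by rewrite -big_mkcond big_pred1_eq.
Qed.

Lemma flow_dphi u (phi : V -> R) : flow u -> inner u (fun e => phi (hd e) - phi (tl e)) = 0.
Proof.
move=> /flow_iff Hu.
have H : forall e, phi (hd e) - phi (tl e) = \big[Rplus/0]_(v : V) ((- phi v) * grad v e).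
  move=> e; rewrite (eq_bigr (fun v => (- phi v) * (if tl e == v then 1 else 0) + phi v * (if hd e == v then 1 else 0))); last first.
    by move=> v _; rewrite /grad; ring.
  rewrite sumRD (sum_delta _ (tl e)) sum_delta; ring.
rewrite (inner_ext (x' := u) (y' := fun e => \big[Rplus/0]_(v : V) ((- phi v) * grad v e))) //.
rewrite /inner (eq_bigr (fun e => \big[Rplus/0]_(v : V) (- phi v * (u e * grad v e)))); last first.
  by move=> e _; rewrite -sumRM; apply: eq_bigr => v _; ring.
rewrite exchange_big /= big1 // => v _; rewrite sumRM; have := Hu v; rewrite /inner => ->; ring.
Qed.

Lemma adj_sym keep u w : adj_in tl hd keep u w = adj_in tl hd keep w u.
Proof.
rewrite /adj_in; apply/existsP/existsP => [] [e He]; exists e; move: He;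
by case: (keep e) => //=; rewrite orbC.
Qed.

Lemma flow_bridge u e : flow u -> bridge tl hd e -> u e = 0.
Proof.
move=> Fu Hb.
pose S := fun v => connect (adj_in tl hd (fun e' => e' != e)) (tl e) v.
pose phi := fun v => if S v then 1 else 0.
have := flow_dphi phi Fu; rewrite /inner (bigD1 e) //= big1.
  by rewrite /phi /S connect0; move: Hb; rewrite /bridge => /negbTE ->; lra.
move=> e' He'; rewrite /phi.
suff -> : S (hd e') = S (tl e') by ring.
have Hadj : adj_in tl hd (fun e'0 => e'0 != e) (tl e') (hd e').
  by apply/existsP; exists e'; rewrite He' !eqxx.
apply/idP/idP => H.
  by apply: connect_trans H _; apply: connect1; rewrite adj_sym.
by apply: connect_trans H _; apply: connect1.
Qed.


Definition dch (D : E -> bool) : chain := fun e => if D e then 1 else -1.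
Definition vD (D : E -> bool) : chain := fun e => / 2 * Pr (dch D) e.

Lemma vD_flow D : flow (vD D).
Proof.
have := flow_lin (/ 2) 0 (Pr_flow (dch D)) (Pr_flow (dch D)).
move=> /flow_iff H; apply/flow_iff => v; rewrite -(H v); apply: inner_ext => // e; rewrite /vD; ring.
Qed.

Lemma circuit_facts D c : circuit_in tl hd D c ->
  [/\ uniq (map fst c), cycle orel c & forall p, p \in c -> oval (dch D) p = 1].
Proof.
rewrite /circuit_in /is_circuit; case=> [[_ [Hu [_ Hc]]] Hin]; split => //.
move=> [e b] /Hin [_ Hb]; simpl in Hb; subst b.
rewrite /oval /dch /=; case: (D e); lra.
Qed.

Lemma vD_ok D : vD_prop tl hd D (vD D).
Proof.
move=> c Hc; have [Hu Hcy Hone] := circuit_facts Hc.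
rewrite (inner_ext (x' := fun e => / 2 * Pr (dch D) e) (y' := wch c)); [|by []|exact: xC_wch Hu].
rewrite /qf (inner_ext (x := xC c) (y := xC c) (x' := wch c) (y' := wch c)); [|exact: xC_wch Hu|exact: xC_wch Hu].
rewrite -/(qf (wch c)) qf_wch_circ // inner_scale -inner_Pr; last exact: wch_flow.
rewrite inner_wch.
rewrite (eq_big_seq (fun _ => 1)); last by move=> p Hp; exact: Hone.
by rewrite -Rmult_assoc Rinv_r ?Rmult_1_l //; lra.
Qed.

Lemma sum_ge0_all (c : seq (E * bool)) (A : pred (E * bool)) (F : E * bool -> R) :
  all A c -> (forall p, A p -> 0 <= F p) -> 0 <= \big[Rplus/0]_(p <- c) F p.
Proof.
move=> HA HF; elim: c HA => [|p c IH] /=; rewrite ?big_nil ?big_cons; first lra.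
by case/andP=> Ap HA; have := HF p Ap; have := IH HA; lra.
Qed.

Lemma vD_unique D v : strongly_connected_orientation tl hd D -> flow v -> vD_prop tl hd D v ->
  forall e, v e = vD D e.
Proof.
move=> Hsc Fv Hv.
pose u := fun e => 1 * v e + (-1) * vD D e.
have Fu : flow u by apply: flow_lin => //; exact: vD_flow.
pose A := fun p : E * bool => ~~ bridge tl hd p.1 && (p.2 == D p.1).
have Hclosed : forall c, c != [::] -> all A c -> cycle orel c -> uniq (map otl c) -> slen (oval u) c = 0.
  move=> c Hne HA Hcy Hun.
  have Hfst : uniq (map fst c).
    rewrite map_inj_in_uniq; first exact: map_uniq Hun.
    move=> [e1 b1] [e2 b2] H1 H2 /= E12; subst e2.
    move: (allP HA _ H1) (allP HA _ H2) => /andP [_ /eqP /= ->] /andP [_ /eqP /= ->] //.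
  have Hci : circuit_in tl hd D c.
    split; first by split; [apply/eqP | split; [|split]].
    move=> p Hp; move: (allP HA _ Hp) => /andP [-> /eqP ->]; by split.
  have E1 := Hv c Hci; have E2 := vD_ok Hci.
  rewrite /slen -inner_wch (inner_ext (x := u) (y := wch c) (x' := u) (y' := xC c)); [| by [] | by move=> e; rewrite xC_wch].
  rewrite inner_lin; lra.
have [phi Hphi] := potential (A := A) (l := oval u) (fun c H1 H2 H3 H4 => Req_le _ _ (esym (Hclosed c H1 H2 H3 H4))).
have Key : forall e, ~~ bridge tl hd e -> u e = phi (hd e) - phi (tl e).
  move=> e Hnb; pose p := (e, D e).
  have Ap : A p by rewrite /A /= Hnb eqxx.
  have Hconn : connect (darc tl hd D) (ohd p) (otl p).
    apply: Hsc; apply: connect1; rewrite /Defs.ohead /Defs.otail /=.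
    by apply/existsP; exists e; rewrite Hnb /=; case: (D e); rewrite !eqxx ?orbT.
  have Hr : forall a b, darc tl hd D a b -> exists q, A q /\ otl q = a /\ ohd q = b.
    move=> a b /existsP [e' /andP [Hnb' He']]; exists (e', D e'); rewrite /A /= Hnb' eqxx.
    by move: He'; rewrite /Defs.otail /Defs.ohead /=; case: (D e') => /andP [/eqP -> /eqP ->].
  have [c [s [Hw Hv']]] := connect_swalk Hr Hconn.
  have [Hcy Hun HA] := swalk_close Hw Hv' Ap erefl erefl.
  have Hne : rcons c p != [::] by case: (c).
  have H0 := Hclosed _ Hne HA Hcy Hun.
  have Hht := sum_heads_tails phi Hcy.
  have Hnn : 0 <= \big[Rplus/0]_(q <- c) (phi (otl q) + oval u q - phi (ohd q)).
    apply: (sum_ge0_all (A := A)); first by case/and3P: Hw.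
    move=> q Aq; have := Hphi q Aq; lra.
  have Hsp : phi (otl p) + oval u p - phi (ohd p) = 0.
    have Hsum : \big[Rplus/0]_(q <- rcons c p) (phi (otl q) + oval u q - phi (ohd q)) = 0.
      rewrite (eq_bigr (fun q => phi (otl q) + oval u q + (-1) * phi (ohd q))); last by move=> q _; ring.
      rewrite !sumRD sumRM Hht; move: H0; rewrite /slen => ->; ring.
    move: Hsum; rewrite -cats1 big_cat big_seq1 /=; have := Hphi p Ap; lra.
  move: Hsp; rewrite /p /oval /Defs.otail /Defs.ohead /=; case: (D e) => /=; lra.
have Hq : qf u = 0.
  rewrite /qf -(flow_dphi phi Fu); apply: eq_bigr => e _.
  case Hb: (bridge tl hd e); first by rewrite (flow_bridge Fu Hb); ring.
  by rewrite -Key ?Hb.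
by move=> e; have := qf_eq0 Hq e; rewrite /u; lra.
Qed.


Lemma qf_sub x y : qf (fun e => x e - y e) = qf x - 2 * inner x y + qf y.
Proof.
rewrite /qf /inner (eq_bigr (fun e => x e * x e + (-2) * (x e * y e) + y e * y e)); last by move=> e _; ring.
rewrite !sumRD sumRM; ring.
Qed.

Lemma int_sq_ge (z : Z) : IZR z <= IZR z * IZR z /\ - IZR z <= IZR z * IZR z.
Proof.
rewrite -mult_IZR -opp_IZR; split; apply: IZR_le; nia.
Qed.

Lemma lower_bound D m : is_int_flow tl hd m -> qf (vD D) <= qf (fun e => vD D e - m e).
Proof.
case=> Fm Hm; rewrite qf_sub.
have -> : inner (vD D) m = / 2 * inner (dch D) m.
  rewrite (inner_ext (x := vD D) (y := m) (x' := fun e => / 2 * Pr (dch D) e) (y' := m)) //.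
  by rewrite inner_scale -inner_Pr.
suff : inner (dch D) m <= qf m by lra.
apply: sum_le_seq => e; have [z ->] := Hm e; have := int_sq_ge z.
by rewrite /dch; case: (D e); lra.
Qed.

Lemma qf_convex t (a b : chain) : 0 <= t <= 1 ->
  qf (fun e => t * a e + (1 - t) * b e) <= t * qf a + (1 - t) * qf b.
Proof.
move=> Ht; rewrite /qf /inner -!sumRM -sumRD; apply: sum_le_seq => e.
have H1 : 0 <= t * (1 - t) by apply: Rmult_le_pos; lra.
have H2 := Rle_0_sqr (a e - b e); rewrite /Rsqr in H2.
have H3 := Rmult_le_pos _ _ H1 H2.
nra.
Qed.

Lemma Pr_ext z z' : (forall e, z e = z' e) -> Pr z = Pr z'.
Proof. by move=> H; rewrite (functional_extensionality z z' H). Qed.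

Lemma cube_aux (l : seq E) z : (forall e, -1 <= z e <= 1) -> (forall e, e \notin l -> z e = 1 \/ z e = -1) ->
  exists D : {ffun E -> bool}, qf (Pr z) <= qf (Pr (dch D)).
Proof.
elim: l z => [|e l IH] z Hb Hs.
  exists [ffun e => if Rle_dec 0 (z e) then true else false].
  rewrite (Pr_ext (z := z) (z' := dch [ffun e => if Rle_dec 0 (z e) then true else false])); first lra.
  move=> e; have := Hs e isT; rewrite /dch ffunE; case: (Rle_dec 0 (z e)) => H /=; lra.
pose z1 := fun e' => if e' == e then 1 else z e'.
pose z2 := fun e' => if e' == e then -1 else z e'.
pose t := (1 + z e) / 2.
have Ht : 0 <= t <= 1 by have := Hb e; rewrite /t; lra.
have Hz : Pr z = fun e' => t * Pr z1 e' + (1 - t) * Pr z2 e'.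
  apply: functional_extensionality => e'; rewrite -Pr_lin; congr Pr.
  apply: functional_extensionality => e''; rewrite /z1 /z2 /t.
  by case: (eqVneq e'' e) => [->|_]; field.
have Hcv := qf_convex (Pr z1) (Pr z2) Ht; rewrite -Hz in Hcv.
have Hh : forall w, (w = 1 \/ w = -1) -> forall e', -1 <= (if e' == e then w else z e') <= 1.
  by move=> w Hw e'; case: (e' == e); [case: Hw => ->; lra | exact: Hb].
have Hs' : forall w, (w = 1 \/ w = -1) -> forall e', e' \notin l -> (if e' == e then w else z e') = 1 \/ (if e' == e then w else z e') = -1.
  move=> w Hw e' He'; case: (eqVneq e' e) => // Hne; apply: Hs.
  by rewrite in_cons negb_or He' andbT.
case: (Rle_dec (qf (Pr z2)) (qf (Pr z1))) => Hc.
  have [D HD] := IH z1 (Hh 1 (or_introl erefl)) (Hs' 1 (or_introl erefl)).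
  exists D; nra.
have [D HD] := IH z2 (Hh (-1) (or_intror erefl)) (Hs' (-1) (or_intror erefl)).
exists D; nra.
Qed.

Lemma cube z : (forall e, -1 <= z e <= 1) -> exists D : {ffun E -> bool}, qf (Pr z) <= qf (Pr (dch D)).
Proof. move=> Hb; apply: (cube_aux (l := enum E)) => // e; by rewrite mem_enum. Qed.


Lemma flow0 : flow (fun _ => 0).
Proof. apply/flow_iff => v; exact: inner0. Qed.

Lemma flow_ext x x' : (forall e, x e = x' e) -> flow x -> flow x'.
Proof. by move=> H; rewrite (functional_extensionality x x' H). Qed.

Lemma qf_ext x x' : (forall e, x e = x' e) -> qf x = qf x'.
Proof. by move=> H; rewrite (functional_extensionality x x' H). Qed.

Lemma sq_bound t Q : t * t <= Q -> - (Q + 1) <= t <= Q + 1.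
Proof. move=> H; split; nra. Qed.

Lemma nearest x : flow x -> exists m, is_int_flow tl hd m /\
  forall m', is_int_flow tl hd m' -> qf (fun e => x e - m e) <= qf (fun e => x e - m' e).
Proof.
move=> Fx.
pose Bd := 2 * qf x + 2.
have [HupB _] := archimed Bd.
have HB0 : 0 <= Bd by have := qf_ge0 x; rewrite /Bd; lra.
have Hup0 : (0 <= up Bd)%Z by apply: le_IZR; lra.
pose K := Z.to_nat (up Bd).
have HK : Z.of_nat K = up Bd by rewrite /K Z2Nat.id.
pose mf := fun (f : {ffun E -> 'I_(K + K).+1}) (e : E) => IZR (Z.of_nat (f e) - Z.of_nat K).
pose f0 : {ffun E -> 'I_(K + K).+1} := [ffun _ => inord K].
have Hf0 : forall e, mf f0 e = 0.
  move=> e; rewrite /mf /f0 ffunE inordK; last by rewrite ltnS leq_addr.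
  by rewrite Z.sub_diag.
have [|fm [_ [Pfm Hmin]]] := @list_min _ (enum {ffun E -> 'I_(K + K).+1}) (fun f => flow (mf f))
    (fun f => qf (fun e => x e - mf f e)).
  exists f0; split; first by apply: In_mem; rewrite mem_enum.
  by apply: flow_ext flow0 => e; rewrite Hf0.
exists (mf fm); split.
  by split => // e; exists (Z.of_nat (fm e) - Z.of_nat K)%Z.
move=> m' [Fm' Hm'].
have H0 : qf (fun e => x e - mf fm e) <= qf x.
  have := Hmin f0 (In_mem (mem_enum _ _)) (flow_ext (fun e => esym (Hf0 e)) flow0).
  by rewrite (qf_ext (x := fun e => x e - mf f0 e) (x' := x)) // => e; rewrite Hf0; ring.
case: (Rle_dec (qf x) (qf (fun e => x e - m' e))) => Hc; first lra.
apply Rnot_le_lt in Hc.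
have Hz : forall e, {z : Z | m' e = IZR z} by move=> e; apply: constructive_indefinite_description; exact: Hm'.
pose zf := fun e => proj1_sig (Hz e).
have Hzf : forall e, m' e = IZR (zf e) by move=> e; rewrite /zf; case: (Hz e).
have Hbd : forall e, (- up Bd < zf e < up Bd)%Z.
  move=> e; have H1 := sq_bound (qf_term x e).
  have H2 := sq_bound (Rle_trans _ _ _ (qf_term (fun e => x e - m' e) e) (Rlt_le _ _ Hc)).
  rewrite /= Hzf in H2.
  split; apply: lt_IZR; rewrite ?opp_IZR; rewrite /Bd in HupB *; lra.
pose f' : {ffun E -> 'I_(K + K).+1} := [ffun e => inord (Z.to_nat (zf e + Z.of_nat K))].
have Hf' : forall e, mf f' e = m' e.
  move=> e; rewrite /mf /f' ffunE inordK.
    by rewrite Z2Nat.id ?Hzf; [congr IZR; lia | have := Hbd e; lia].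
  apply/ltP; have := Hbd e; rewrite -HK => H; rewrite -plusE; lia.
have := Hmin f' (In_mem (mem_enum _ _)) (flow_ext (fun e => esym (Hf' e)) Fm').
by rewrite (qf_ext (x := fun e => x e - mf f' e) (x' := fun e => x e - m' e)) // => e; rewrite Hf'.
Qed.


Lemma wch_int c e : exists k : Z, wch c e = IZR k.
Proof.
rewrite /wch; elim: c => [|p c [k Hk]]; first by exists 0%Z; rewrite big_nil.
rewrite big_cons Hk; case: (p.1 == e); last by exists k; ring.
case: (p.2); [exists (1 + k)%Z | exists (-1 + k)%Z]; rewrite plus_IZR //.
Qed.

Lemma qf_scale a x : qf (fun e => a * x e) = a * a * qf x.
Proof. rewrite /qf /inner -sumRM; apply: eq_bigr => e _; ring. Qed.

Lemma covering_step x : flow x -> exists m (D : {ffun E -> bool}),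
  is_int_flow tl hd m /\ qf (fun e => x e - m e) <= qf (vD D).
Proof.
move=> Fx; have [m [[Fm Im] Hmin]] := nearest Fx.
pose y := fun e => x e - m e.
have Fy : flow y by apply: (flow_ext (x := fun e => 1 * x e + (-1) * m e)) => [e|]; [rewrite /y; ring | exact: flow_lin].
have Hcyc : forall c, c != [::] -> all predT c -> cycle orel c -> uniq (map otl c) ->
    0 <= slen (fun p => 1 - 2 * oval y p) c.
  move=> c _ _ Hcy Hun.
  have Fw := wch_flow Hcy.
  have Iw : is_int_flow tl hd (fun e => m e + wch c e).
    split; first by apply: (flow_ext (x := fun e => 1 * m e + 1 * wch c e)) => [e|]; [ring | exact: flow_lin].
    move=> e; have [z1 ->] := Im e; have [z2 ->] := wch_int c e; exists (z1 + z2)%Z; by rewrite plus_IZR.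
  have H1 := Hmin _ Iw.
  rewrite (qf_ext (x := fun e => x e - (m e + wch c e)) (x' := fun e => y e - wch c e)) in H1; last first.
    by move=> e; rewrite /y; ring.
  rewrite [X in _ <= X]qf_sub inner_wch in H1; change (qf y <= qf y - 2 * \big[Rplus/0]_(p <- c) oval y p + qf (wch c)) in H1.
  have H2 := qf_wch_le (map_uniq Hun).
  rewrite /slen (eq_bigr (fun p => 1 + (-2) * oval y p)); last by move=> p _; ring.
  rewrite sumRD sumRM.
  set S1 := \big[Rplus/0]_(p <- c) 1 in H2 *; set S2 := \big[Rplus/0]_(p <- c) oval y p in H1 *; lra.
have [phi Hphi] := potential Hcyc.
pose z := fun e => 2 * y e + (phi (hd e) - phi (tl e)).
have Hzb : forall e, -1 <= z e <= 1.
  move=> e; have := Hphi (e, true) isT; have := Hphi (e, false) isT.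
  rewrite /Defs.ohead /Defs.otail /oval /z /=; lra.
have HPz : forall e, Pr z e = 2 * y e.
  apply: (Pr_char (y := fun e => 2 * y e)).
    by apply: (flow_ext (x := fun e => 2 * y e + 0 * y e)) => [e|]; [ring | exact: flow_lin].
  move=> h Fh; rewrite (inner_ext (x' := fun e => phi (hd e) - phi (tl e)) (y' := h)) //; last by move=> e; rewrite /z; ring.
  by rewrite inner_sym flow_dphi.
have [D HD] := cube Hzb.
exists m, D; split => //.
rewrite (qf_ext (x := Pr z) (x' := fun e => 2 * y e)) // qf_scale in HD.
rewrite /vD qf_scale -/y; lra.
Qed.


Definition ind (e0 : E) : chain := fun e => if e == e0 then 1 else 0.

Lemma inner_ind e0 h : inner (ind e0) h = h e0.
Proof.
rewrite /inner /ind (eq_bigr (fun e => if e == e0 then h e else 0)); last by move=> e _; case: (e == e0); ring.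
by rewrite -big_mkcond big_pred1_eq.
Qed.

Lemma cross (r : rel V) (S : pred V) a b : connect r a b -> S a -> ~~ S b ->
  exists u w, [/\ r u w, S u & ~~ S w].
Proof.
move=> /connectP [s Hp ->]; elim: s a Hp => [|w s IH] a /=; first by move=> _ ->.
case/andP=> raw Hp Sa Sb; case Sw: (S w); first exact: IH Hp Sw Sb.
by exists a, w; rewrite Sw.
Qed.

Lemma nonbridge_flow e0 : ~~ bridge tl hd e0 -> exists h, flow h /\ h e0 = -1.
Proof.
rewrite /bridge negbK => Hc.
have Hr : forall a b, adj_in tl hd (fun e => e != e0) a b -> exists p, (fun p : E * bool => p.1 != e0) p /\ otl p = a /\ ohd p = b.
  move=> a b /existsP [e /andP [He /orP [/andP [/eqP Ha /eqP Hb]|/andP [/eqP Hb /eqP Ha]]]].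
    by exists (e, true).
  by exists (e, false).
have [c [s [Hw Hv]]] := connect_swalk Hr Hc.
have Hw' : swalk predT c (hd e0) by case/and3P: Hw => _ H1 H2; apply/and3P; split => //; exact: all_predT.
have [Hcy _ _] := swalk_close (p := (e0, false)) Hw' Hv isT erefl erefl.
exists (wch (rcons c (e0, false))); split; first exact: wch_flow.
rewrite /wch -cats1 big_cat big_seq1 /= eqxx big_seq_cond big1; first lra.
move=> p /andP [Hp _]; case/and3P: Hw => /allP HA _ _; by rewrite (negbTE (HA p Hp)).
Qed.


Lemma qf_lin a b x y : qf (fun e => a * x e + b * y e) = a * a * qf x + 2 * a * b * inner x y + b * b * qf y.
Proof.
rewrite /qf /inner (eq_bigr (fun e => (a * a) * (x e * x e) + (2 * a * b) * (x e * y e) + (b * b) * (y e * y e))); last by move=> e _; ring.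
by rewrite !sumRD !sumRM.
Qed.

Lemma flip_qf (D : {ffun E -> bool}) e0 :
  qf (vD [ffun e => if e == e0 then ~~ D e else D e]) = qf (vD D) - dch D e0 * Pr (dch D) e0 + qf (Pr (ind e0)).
Proof.
set D' := [ffun e => _].
have Hd : forall e, dch D' e = 1 * dch D e + (-2 * dch D e0) * ind e0 e.
  move=> e; rewrite /dch /ind /D' ffunE; case: (eqVneq e e0) => [->|Hne].
    by case: (D e0) => /=; lra.
  by case: (D e); case: (D e0) => /=; lra.
have HP : forall e, vD D' e = / 2 * (1 * Pr (dch D) e + (-2 * dch D e0) * Pr (ind e0) e).
  by move=> e; rewrite /vD (Pr_ext Hd) Pr_lin.
rewrite (qf_ext HP) qf_scale qf_lin /vD qf_scale.
have -> : inner (Pr (dch D)) (Pr (ind e0)) = Pr (dch D) e0.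
  by rewrite inner_sym -inner_Pr ?inner_ind //; exact: Pr_flow.
have Hsq : -2 * dch D e0 * (-2 * dch D e0) = 4 by rewrite /dch; case: (D e0); ring.
rewrite Hsq; field.
Qed.

Lemma max_sc : exists D : {ffun E -> bool}, strongly_connected_orientation tl hd D /\
  forall D' : {ffun E -> bool}, qf (vD D') <= qf (vD D).
Proof.
have [|D [_ [_ Hmax]]] := @list_min _ (enum {ffun E -> bool}) (fun _ => True) (fun D => - qf (vD D)).
  by exists [ffun _ => true]; split => //; apply: In_mem; rewrite mem_enum.
have Hm : forall D' : {ffun E -> bool}, qf (vD D') <= qf (vD D).
  move=> D'; have H1 : List.In D' (enum {ffun E -> bool}) by apply: In_mem; rewrite mem_enum.
  exact: Ropp_le_cancel (Hmax D' H1 I).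
exists D; split => //.
move=> u w Hc; case: (boolP (connect (darc tl hd D) u w)) => // Hnc; exfalso.
pose S := fun v => connect (darc tl hd D) u v.
have [x0 [y0 [Hxy Sx Sy]]] := cross (S := S) Hc (connect0 _ _) Hnc.
case/existsP: Hxy => e0 /andP [Hnb0 He0].
pose X := fun e => ~~ bridge tl hd e && (S (tl e) != S (hd e)).
have HX0 : X e0.
  rewrite /X Hnb0 /=; case/orP: He0 => /andP [/eqP -> /eqP ->]; move: Sx Sy.
    by case: (S x0); case: (S y0).
  by case: (S x0); case: (S y0).
have Hdir1 : forall e, ~~ bridge tl hd e -> S (tl e) -> ~~ S (hd e) -> D e = false.
  move=> e Hnb Ht Hh; apply/negP => De; move: Hh; rewrite /S; apply/negP/negPn.
  apply: connect_trans Ht _; apply: connect1; apply/existsP; exists e; by rewrite Hnb De !eqxx.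
have Hdir2 : forall e, ~~ bridge tl hd e -> S (hd e) -> ~~ S (tl e) -> D e = true.
  move=> e Hnb Hh Ht; apply/negPn/negP => De; move: Ht; rewrite /S; apply/negP/negPn.
  apply: connect_trans Hh _; apply: connect1; apply/existsP; exists e; by rewrite Hnb (negbTE De) !eqxx.
have Hkey : forall h, flow h -> \big[Rplus/0]_(e | X e) (dch D e * h e) = 0.
  move=> h Fh; have := flow_dphi (fun v => if S v then 1 else 0) Fh.
  move=> Hd; rewrite big_mkcond; apply: etrans Hd; rewrite /inner; apply: eq_bigr => e _.
  case Hb: (bridge tl hd e); first by rewrite /X Hb (flow_bridge Fh Hb) /=; ring.
  rewrite /X Hb /=.
  case St: (S (tl e)); case Sh: (S (hd e)) => /=; try ring.
    by rewrite /dch Hdir1 ?Hb ?St ?Sh //; ring.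
  by rewrite /dch Hdir2 ?Hb ?St ?Sh //; ring.
have Hsum : \big[Rplus/0]_(e | X e) qf (Pr (ind e)) <= 0.
  have H1 : \big[Rplus/0]_(e | X e) (qf (Pr (ind e)) - dch D e * Pr (dch D) e) <= 0.
    rewrite big_mkcond /=; apply: (Rle_trans _ (\big[Rplus/0]_(e : E) 0)).
      apply: sum_le_seq => e; case: (X e); last lra.
      have := Hm [ffun e' => if e' == e then ~~ D e' else D e']; rewrite flip_qf.
      set a := qf (vD D); set b := dch D e * _; set c := qf _; move=> HH; lra.
    by rewrite big1 //; lra.
  rewrite (eq_bigr (fun e => (qf (Pr (ind e)) - dch D e * Pr (dch D) e) + dch D e * Pr (dch D) e)); last first.
    by move=> e _; set a := qf _; set b := dch D e * _; ring.
  rewrite sumRD Hkey; last exact: Pr_flow.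
  move: H1; set a := \big[Rplus/0]_(e | X e) _; move=> H1; lra.
have Hq0 : qf (Pr (ind e0)) = 0.
  apply: Rle_antisym; last exact: qf_ge0.
  apply: Rle_trans Hsum; rewrite big_mkcond /=.
  have := sumR_ge_term (F := fun e => if X e then qf (Pr (ind e)) else 0) e0.
  rewrite HX0; apply => e; case: (X e); [exact: qf_ge0 | lra].
have [h [Fh He0h]] := nonbridge_flow Hnb0.
have := inner_Pr (ind e0) Fh; rewrite inner_ind (inner_ext (x' := fun _ => 0) (y' := h)).
  by rewrite inner0; lra.
  exact: qf_eq0.
by [].
Qed.


Lemma main_sec :
  (forall D : E -> bool, strongly_connected_orientation tl hd D ->
     exists! v : chain, flow v /\ vD_prop tl hd D v) /\
  exists M : R,
    is_covering_number tl hd M /\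
    is_greatest (fun r => exists (D : E -> bool) (v : chain),
                   strongly_connected_orientation tl hd D /\
                   flow v /\ vD_prop tl hd D v /\ r = qf v) M.
Proof.
split.
  move=> D Hsc; exists (vD D); split; first by split; [exact: vD_flow | exact: vD_ok].
  move=> v' [Fv' Hv']; apply: functional_extensionality => e.
  exact: esym (vD_unique Hsc Fv' Hv' e).
have [Ds [Hsc Hmax]] := max_sc.
exists (qf (vD Ds)); split.
  split.
    move=> x Fx; have [m [D [Im Hle]]] := covering_step Fx.
    exists m; split => //; exact: Rle_trans Hle (Hmax D).
  move=> r' Hcov; have [m [Im Hle]] := Hcov (vD Ds) (vD_flow Ds).
  exact: Rle_trans (lower_bound Ds Im) Hle.
split.
  exists Ds, (vD Ds); split => //; split; first exact: vD_flow.
  by split => //; exact: vD_ok.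
move=> r [D [v [Hsc' [Fv [Hv ->]]]]].
have -> : v = vD [ffun e => D e].
  apply: functional_extensionality => e; rewrite (vD_unique Hsc' Fv Hv e).
  by rewrite /vD; congr (/ 2 * Pr _ e); apply: functional_extensionality => e'; rewrite /dch ffunE.
exact: Hmax.
Qed.

End G.

Theorem mainTheorem19 (V E : finType) (tl hd : E -> V)
    (Hconn : connected_graph tl hd) :
  (forall D : E -> bool, strongly_connected_orientation tl hd D ->
     exists! v : chain E, is_flow tl hd v /\ vD_prop tl hd D v) /\
  exists M : R,
    is_covering_number tl hd M /\
    is_greatest (fun r => exists (D : E -> bool) (v : chain E),
                   strongly_connected_orientation tl hd D /\
                   is_flow tl hd v /\ vD_prop tl hd D v /\ r = qf v) M.
Proof. exact: main_sec. Qed.
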